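(* Let $\kappa$ be of class $\mathcal{G}_2(2,0)$, $f\in C^2[0,1]$, and let $\varphi$ be the unique solution of $x-\mathcal{K}(x)=f$. If $v\in C^1[0,1]$, then $$\|(I-Q_n)\mathcal{K}_m'(\varphi)(I-Q_n)v\|_\infty=O(h^3)\quad\text{and}\quad\|\mathcal{K}_m'(\varphi)(I-Q_n)\mathcal{K}_m'(\varphi)(I-Q_n)v\|_\infty=O(h^4).$$
   Context: Setting. A kernel $\kappa:[0,1]\times[0,1]\times\mathbb{R}\to\mathbb{R}$ is of class $\mathcal{G}_2(2,0)$ if: (1) $\ell=\partial\kappa/\partial u$ is continuous on $\Psi=[0,1]^2\times\mathbb{R}$; (2) with $\Psi_1=\{0\le t\le s\le1,u\in\mathbb{R}\}$, $\Psi_2=\{0\le s\le t\le1,u\in\mathbb{R}\}$, there are $\ell_i\in C^{2}(\Psi_i)$ with $\ell=\ell_i$ on $\Psi_i$; (3) there are $\kappa_i\in C^{2}(\Psi_i)$ with $\kappa=\kappa_i$ on $\Psi_i$; (4) $\partial^2\kappa/\partial u^2$ is continuous on $\Psi$. $\mathcal{K}(x)(s)=\int_0^1\kappa(s,t,x(t))dt$ on $L^\infty[0,1]$; the solution $\varphi$ lies in $C^2[0,1]$. Quadrature: Gauss two-point rule with $w_1=w_2=1/2$, $\mu_{1,2}=\tfrac12\mp\tfrac1{2\sqrt3}$. For $n,p\in\mathbb{N}$, $m=np$, $h=1/n$, $\tilde h=1/m$, $s_i=i/m$, $\zeta_q^i=s_{i-1}+\mu_q\tilde h$. $\mathcal{K}_m'(\varphi)v(s)=\tilde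 h\sum_{i=1}^m\sum_{q=1}^2w_q\,\ell(s,\zeta_q^i,\varphi(\zeta_q^i))\,v(\zeta_q^i)$. Projection: $t_j=j/n$. For $v\in C[0,1]$, $(Q_nv)(t)=\frac1p\sum_{\nu=1}^p\sum_{q=1}^2w_qv(\zeta_q^{(j-1)p+\nu})$ for $t\in(t_{j-1},t_j]$, $j=1,\dots,n$, and $(Q_nv)(0)=(Q_nv)(t_1)$ (discrete orthogonal projection onto piecewise constants). Notation: $A=O(B)$ means $|A|\le CB$ with $C$ independent of $n,p$, for all sufficiently large $n$. *)

(* Defs.v *)
From Stdlib Require Import Reals Lra List.
From Coquelicot Require Import Coquelicot.
Open Scope R_scope.

Definition sumR (lo k : nat) (f : nat -> R) : R :=
  fold_right (fun i acc => f i + acc) 0 (seq lo k).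

Definition in01 (x : R) : Prop := 0 <= x <= 1.

Definition Psi (s t u : R) : Prop := in01 s /\ in01 t.
Definition Psi1 (s t u : R) : Prop := 0 <= t /\ t <= s /\ s <= 1.
Definition Psi2 (s t u : R) : Prop := 0 <= s /\ s <= t /\ t <= 1.

Definition cont3_on (S : R -> R -> R -> Prop) (g : R -> R -> R -> R) : Prop :=
  forall s t u, S s t u -> forall eps, 0 < eps -> exists delta, 0 < delta /\
    forall s' t' u', S s' t' u' ->
      Rabs (s' - s) < delta -> Rabs (t' - t) < delta -> Rabs (u' - u) < delta ->
      Rabs (g s' t' u' - g s t u) < eps.

Definition allR3 (s t u : R) : Prop := True.

Definition pd1 (g : R -> R -> R -> R) : R -> R -> R -> R :=
  fun s t u => Derive (fun x => g x t u) s.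
Definition pd2 (g : R -> R -> R -> R) : R -> R -> R -> R :=
  fun s t u => Derive (fun x => g s x u) t.
Definition pd3 (g : R -> R -> R -> R) : R -> R -> R -> R :=
  fun s t u => Derive (fun x => g s t x) u.

Definition C1_R3 (g : R -> R -> R -> R) : Prop :=
  cont3_on allR3 g /\
  (forall s t u, ex_derive (fun x => g x t u) s /\ ex_derive (fun x => g s x u) t
                 /\ ex_derive (fun x => g s t x) u) /\
  cont3_on allR3 (pd1 g) /\ cont3_on allR3 (pd2 g) /\ cont3_on allR3 (pd3 g).

Definition C2_R3 (g : R -> R -> R -> R) : Prop :=
  C1_R3 g /\ C1_R3 (pd1 g) /\ C1_R3 (pd2 g) /\ C1_R3 (pd3 g).

(* C^2 on a closed region S: restriction of a C^2 function on R^3 *)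
Definition C2_on (S : R -> R -> R -> Prop) (g : R -> R -> R -> R) : Prop :=
  exists G, C2_R3 G /\ forall s t u, S s t u -> G s t u = g s t u.

Definition ell (kappa : R -> R -> R -> R) : R -> R -> R -> R := pd3 kappa.

Definition class_G2_2_0 (kappa : R -> R -> R -> R) : Prop :=
  (forall s t u, Psi s t u -> ex_derive (fun x => kappa s t x) u) /\
  cont3_on Psi (ell kappa) /\
  (exists l1 l2, C2_on Psi1 l1 /\ C2_on Psi2 l2 /\
     (forall s t u, Psi1 s t u -> ell kappa s t u = l1 s t u) /\
     (forall s t u, Psi2 s t u -> ell kappa s t u = l2 s t u)) /\
  (exists k1 k2, C2_on Psi1 k1 /\ C2_on Psi2 k2 /\
     (forall s t u, Psi1 s t u -> kappa s t u = k1 s t u) /\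
     (forall s t u, Psi2 s t u -> kappa s t u = k2 s t u)) /\
  (forall s t u, Psi s t u -> ex_derive (fun x => ell kappa s t x) u) /\
  cont3_on Psi (pd3 (ell kappa)).

Definition C1_R (g : R -> R) : Prop :=
  (forall x, continuous g x) /\ (forall x, ex_derive g x) /\
  (forall x, continuous (Derive g) x).
Definition C2_R (g : R -> R) : Prop :=
  C1_R g /\ C1_R (Derive g).
(* C^k[0,1]: restriction to [0,1] of a C^k function on R *)
Definition C1_01 (g : R -> R) : Prop :=
  exists G, C1_R G /\ forall x, in01 x -> G x = g x.
Definition C2_01 (g : R -> R) : Prop :=
  exists G, C2_R G /\ forall x, in01 x -> G x = g x.
Definition C0_01 (g : R -> R) : Prop :=
  forall s, in01 s -> forall eps, 0 < eps -> exists delta, 0 < delta /\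
    forall t, in01 t -> Rabs (t - s) < delta -> Rabs (g t - g s) < eps.

Definition Kop (kappa : R -> R -> R -> R) (x : R -> R) (s : R) : R :=
  RInt (fun t => kappa s t (x t)) 0 1.
Definition solves (kappa : R -> R -> R -> R) (f x : R -> R) : Prop :=
  forall s, in01 s -> x s - Kop kappa x s = f s.

(* ---------- Gauss two-point rule ---------- *)
Definition w_gauss : R := / 2.
Definition mu1 : R := / 2 - / (2 * sqrt 3).
Definition mu2 : R := / 2 + / (2 * sqrt 3).
Definition mu (q : nat) : R := if Nat.eqb q 1 then mu1 else mu2.
(* zeta_q^i = s_{i-1} + mu_q / m, i = 1..m, q = 1,2 *)
Definition zeta (m i q : nat) : R := INR (i - 1) / INR m + mu q / INR m.

Definition Kmp (kappa : R -> R -> R -> R) (phi : R -> R) (m : nat)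
    (v : R -> R) (s : R) : R :=
  / INR m * sumR 1 m (fun i => sumR 1 2 (fun q =>
     w_gauss * ell kappa s (zeta m i q) (phi (zeta m i q)) * v (zeta m i q))).

(* ---------- discrete orthogonal projection Q_n onto piecewise constants ---- *)
Definition cell_avg (n p : nat) (v : R -> R) (j : nat) : R :=
  / INR p * sumR 1 p (fun nu => sumR 1 2 (fun q =>
     w_gauss * v (zeta (n * p) ((j - 1) * p + nu) q))).

Definition indic {P : Prop} (d : {P} + {~ P}) : R := if d then 1 else 0.

Definition in_cell (n j : nat) (t : R) : Prop :=
  INR (j - 1) / INR n < t /\ t <= INR j / INR n.

Definition in_cell_dec (n j : nat) (t : R) : {in_cell n j t} + {~ in_cell n j t}.
Proof.
  unfold in_cell.
  destruct (Rlt_dec (INR (j - 1) / INR n) t) as [H1|H1];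
  destruct (Rle_dec t (INR j / INR n)) as [H2|H2]; tauto.
Defined.

(* (Q_n v)(t) = cell_avg j on (t_{j-1}, t_j], j = 1..n; (Q_n v)(0) = (Q_n v)(t_1) *)
Definition Qn (n p : nat) (v : R -> R) (t : R) : R :=
  sumR 1 n (fun j => indic (in_cell_dec n j t) * cell_avg n p v j)
  + indic (Req_dec_T t 0) * cell_avg n p v 1.

Definition IQn (n p : nat) (v : R -> R) : R -> R := fun t => v t - Qn n p v t.

(* Main.v *)
Require Import Defs.
From Stdlib Require Import Reals.
From Coquelicot Require Import Coquelicot.
From Stdlib Require Import Lra Lia List Classical ClassicalEpsilon.
Open Scope R_scope.


Definition G3 (g : R -> R -> R -> R) (x : Compactness.Tn 3 R) : R :=
  match x with (a,(b,(c,_))) => g a b c end.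

Lemma fold_max_ge (l : list (Compactness.Tn 3 R)) (F : Compactness.Tn 3 R -> R) t :
  In t l -> F t <= fold_right (fun t acc => Rmax (F t) acc) 0 l.
Proof.
  induction l as [|a l IH]; simpl; [tauto|].
  intros [->|H]. apply Rmax_l. eapply Rle_trans; [apply IH, H| apply Rmax_r].
Qed.

Lemma box_bound (g : R->R->R->R) (Hg : cont3_on allR3 g) (B : R) :
  exists K, forall s t u, in01 s -> in01 t -> -B <= u <= B -> Rabs (g s t u) <= K.
Proof.
  assert (H : forall x : Compactness.Tn 3 R, {d : posreal | forall s' t' u',
     match x with (a,(b,(c,_))) =>
      Rabs (s' - a) < d -> Rabs (t' - b) < d -> Rabs (u' - c) < d ->
      Rabs (g s' t' u' - g a b c) < 1 end}).
  { intros [a [b [c []]]]. apply constructive_indefinite_description.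
    destruct (Hg a b c I 1 Rlt_0_1) as [d [Hd Hd']].
    exists (mkposreal d Hd). intros s' t' u'. simpl. intros. apply Hd'; auto. exact I. }
  set (delta := fun x => proj1_sig (H x)).
  pose proof (compactness_list 3 (0,(0,(-B,tt))) (1,(1,(B,tt))) delta) as Hc.
  apply NNPP; intro Hn; apply Hc; intros [l Hl]; apply Hn.
  exists (fold_right (fun t acc => Rmax (Rabs (G3 g t) + 1) acc) 0 l).
  intros s t u Hs Ht Hu.
  destruct (Hl (s,(t,(u,tt)))) as [x [Hin [Hb Hcl]]].
  { simpl. unfold in01 in *. tauto. }
  eapply Rle_trans; [|apply (fold_max_ge l (fun t => Rabs (G3 g t) + 1) x Hin)].
  destruct x as [a [b [c []]]]. simpl in Hcl |- *.
  unfold delta in Hcl. destruct (H (a,(b,(c,tt)))) as [d Hd]. simpl in Hcl.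
  destruct Hcl as [H1 [H2 [H3 _]]].
  specialize (Hd s t u H1 H2 H3).
  pose proof (Rabs_triang_inv (g s t u) (g a b c)). lra.
Qed.

Lemma mvt_bound (f : R -> R) (M a b : R) :
  (forall x, ex_derive f x) ->
  (forall x, Rmin a b <= x <= Rmax a b -> Rabs (Derive f x) <= M) ->
  Rabs (f b - f a) <= M * Rabs (b - a).
Proof.
  intros Hd HM.
  destruct (MVT_gen f a b (Derive f)) as [c [Hc Heq]].
  - intros x _. apply Derive_correct, Hd.
  - intros x _. apply continuity_pt_filterlim. apply (ex_derive_continuous (K:=R_AbsRing) (V:=R_NormedModule)), Hd.
  - rewrite Heq, Rabs_mult. apply Rmult_le_compat_r; [apply Rabs_pos|]. apply HM, Hc.
Qed.

Lemma bound_1d (G : R -> R) : (forall x, continuous G x) ->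
  exists B, forall x, in01 x -> Rabs (G x) <= B.
Proof.
  intros HG.
  destruct (continuity_ab_maj (fun x => Rabs (G x)) 0 1) as [Mx [HM _]]; [lra| |].
  - intros c _. apply (continuity_pt_comp G Rabs). apply continuity_pt_filterlim, HG.
    apply Rcontinuity_abs.
  - exists (Rabs (G Mx)). intros x Hx. apply HM, Hx.
Qed.

Lemma lip_1d (G : R -> R) : C1_R G ->
  exists L, 0 <= L /\ forall x y, in01 x -> in01 y -> Rabs (G x - G y) <= L * Rabs (x - y).
Proof.
  intros [Hc [Hd Hdc]].
  destruct (bound_1d (Derive G) Hdc) as [B HB].
  exists (Rabs B). split; [apply Rabs_pos|]. intros x y Hx Hy.
  apply mvt_bound; auto. intros z Hz. eapply Rle_trans; [apply HB|apply Rle_abs].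
  unfold in01 in *. split.
  - eapply Rle_trans; [|apply Hz]. apply Rmin_glb; lra.
  - eapply Rle_trans; [apply Hz|]. apply Rmax_lub; lra.
Qed.

Lemma sumR_S lo k f : sumR lo (S k) f = f lo + sumR (S lo) k f.
Proof. reflexivity. Qed.
Lemma sumR_0 lo f : sumR lo 0 f = 0.
Proof. reflexivity. Qed.

Lemma sumR_ext lo k f g : (forall i, (lo <= i < lo + k)%nat -> f i = g i) ->
  sumR lo k f = sumR lo k g.
Proof.
  revert lo; induction k; intros lo H; [reflexivity|].
  rewrite !sumR_S, H by lia. f_equal. apply IHk. intros; apply H; lia.
Qed.

Lemma sumR_add_len lo a b f : sumR lo (a + b) f = sumR lo a f + sumR (lo + a) b f.
Proof.
  revert lo; induction a; intros lo; simpl.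
  - rewrite Nat.add_0_r, sumR_0. ring.
  - change (sumR lo (S (a + b)) f) with (f lo + sumR (S lo) (a + b) f).
    rewrite sumR_S, IHa. replace (S lo + a)%nat with (lo + S a)%nat by lia. ring.
Qed.

Lemma sumR_shift lo a k f : sumR (lo + a) k f = sumR lo k (fun i => f (i + a)%nat).
Proof.
  revert lo; induction k; intros lo; [reflexivity|].
  rewrite !sumR_S. replace (S (lo + a)) with (S lo + a)%nat by lia. rewrite IHk.
  reflexivity.
Qed.

Lemma sumR_plus lo k f g : sumR lo k (fun i => f i + g i) = sumR lo k f + sumR lo k g.
Proof. revert lo; induction k; intros lo; [simpl; unfold sumR; simpl; ring|].
  rewrite !sumR_S, IHk. ring. Qed.

Lemma sumR_scal lo k c f : sumR lo k (fun i => c * f i) = c * sumR lo k f.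
Proof. revert lo; induction k; intros lo; [unfold sumR; simpl; ring|].
  rewrite !sumR_S, IHk. ring. Qed.

Lemma sumR_const lo k c : sumR lo k (fun _ => c) = INR k * c.
Proof. revert lo; induction k; intros lo; [unfold sumR; simpl; ring|].
  rewrite sumR_S, IHk, S_INR. ring. Qed.

Lemma sumR_abs_bound lo k f M : (forall i, (lo <= i < lo + k)%nat -> Rabs (f i) <= M) ->
  Rabs (sumR lo k f) <= INR k * M.
Proof.
  revert lo; induction k; intros lo H.
  - rewrite sumR_0, Rabs_R0. simpl; lra.
  - rewrite sumR_S, S_INR. eapply Rle_trans; [apply Rabs_triang|].
    pose proof (H lo ltac:(lia)). pose proof (IHk (S lo) ltac:(intros; apply H; lia)). lra.
Qed.

Lemma sumR_abs_bound_exc lo k f a b i0 :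
  (forall i, (lo <= i < lo + k)%nat -> i <> i0 -> Rabs (f i) <= a) ->
  Rabs (f i0) <= a + b -> 0 <= b ->
  Rabs (sumR lo k f) <= INR k * a + b.
Proof.
  revert lo; induction k; intros lo H H0 Hb.
  - rewrite sumR_0, Rabs_R0. simpl; lra.
  - rewrite sumR_S, S_INR. eapply Rle_trans; [apply Rabs_triang|].
    destruct (Nat.eq_dec lo i0) as [->|Hne].
    + pose proof (sumR_abs_bound (S i0) k f a ltac:(intros; apply H; lia)). lra.
    + pose proof (H lo ltac:(lia) Hne). pose proof (IHk (S lo) ltac:(intros; apply H; lia) H0 Hb). lra.
Qed.

Lemma sumR_single lo k f i0 : (lo <= i0 < lo + k)%nat ->
  (forall i, (lo <= i < lo + k)%nat -> i <> i0 -> f i = 0) -> sumR lo k f = f i0.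
Proof.
  revert lo; induction k; intros lo Hi H; [lia|].
  rewrite sumR_S. destruct (Nat.eq_dec lo i0) as [->|Hne].
  - rewrite (sumR_ext _ _ _ (fun _ => 0)), sumR_const by (intros; apply H; lia). ring.
  - rewrite H by lia. rewrite IHk by (try lia; intros; apply H; lia). ring.
Qed.

Lemma sumR_zero lo k f : (forall i, (lo <= i < lo + k)%nat -> f i = 0) -> sumR lo k f = 0.
Proof. intros H. rewrite (sumR_ext _ _ _ (fun _ => 0)), sumR_const by auto. ring. Qed.

Lemma sumR_regroup n p F :
  sumR 1 (n * p) F = sumR 1 n (fun j => sumR 1 p (fun nu => F ((j - 1) * p + nu)%nat)).
Proof.
  induction n.
  - reflexivity.
  - replace (S n * p)%nat with (n * p + p)%nat by lia.
    replace (S n) with (n + 1)%nat by lia.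
    rewrite sumR_add_len, IHn, sumR_add_len. f_equal.
    rewrite sumR_shift. unfold sumR at 2. simpl.
    rewrite Rplus_0_r. apply sumR_ext. intros. f_equal. lia.
Qed.

Definition zt (n p j nu q : nat) : R := zeta (n * p) ((j - 1) * p + nu) q.

Lemma mu_bounds q : 0 < mu q < 1.
Proof.
  assert (H3 : 1 < sqrt 3).
  { rewrite <- sqrt_1. apply sqrt_lt_1; lra. }
  assert (H : 0 < / (2 * sqrt 3) < / 2).
  { split. apply Rinv_0_lt_compat; lra. apply Rinv_lt_contravar; nra. }
  unfold mu, mu1, mu2. destruct (Nat.eqb q 1); lra.
Qed.

Lemma Z_in (n p j nu q : nat) : (1 <= n)%nat -> (1 <= p)%nat -> (1 <= j)%nat ->
  (1 <= nu <= p)%nat ->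
  INR (j - 1) / INR n < zt n p j nu q < INR j / INR n.
Proof.
  intros Hn Hp Hj Hnu. unfold zt, zeta.
  assert (Hn' : 1 <= INR n) by (apply (le_INR 1); lia).
  assert (Hp' : 1 <= INR p) by (apply (le_INR 1); lia).
  assert (Hnu' : 0 <= INR (nu - 1) <= INR p - 1).
  { split. apply pos_INR. rewrite minus_INR by lia. pose proof (le_INR nu p ltac:(lia)). simpl; lra. }
  replace ((j - 1) * p + nu - 1)%nat with ((j - 1) * p + (nu - 1))%nat by nia.
  rewrite plus_INR, !mult_INR.
  replace (INR j) with (INR (j - 1) + 1) by (rewrite minus_INR by lia; simpl; ring).
  pose proof (mu_bounds q).
  set (a := INR (j - 1)). assert (0 <= a) by apply pos_INR.
  set (N := INR n) in *. set (P := INR p) in *. set (m := mu q) in *.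
  set (b := INR (nu - 1)) in *.
  split.
  - apply (Rmult_lt_reg_r (N * P)); [nra|].
    field_simplify; lra.
  - apply (Rmult_lt_reg_r (N * P)); [nra|].
    field_simplify; lra.
Qed.

Lemma A_ext n p j f g :
  (forall nu q, (1 <= nu <= p)%nat -> (1 <= q < 3)%nat -> f (zt n p j nu q) = g (zt n p j nu q)) ->
  cell_avg n p f j = cell_avg n p g j.
Proof.
  intros H. unfold cell_avg. f_equal. apply sumR_ext. intros nu Hnu.
  apply sumR_ext. intros q Hq. unfold zt in H. rewrite H by lia. reflexivity.
Qed.

Lemma A_lin n p j a b f g :
  cell_avg n p (fun t => a * f t + b * g t) j = a * cell_avg n p f j + b * cell_avg n p g j.
Proof.
  unfold cell_avg.
  match goal with |- _ = a * (/ INR p * ?S1) + b * (/ INR p * ?S2) =>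
    transitivity (/ INR p * (a * S1 + b * S2)); [|ring] end.
  f_equal. rewrite <- !sumR_scal, <- sumR_plus. apply sumR_ext. intros nu _.
  rewrite <- !sumR_scal, <- sumR_plus. apply sumR_ext. intros q _. ring.
Qed.

Lemma A_const n p j c : (1 <= p)%nat -> cell_avg n p (fun _ => c) j = c.
Proof.
  intros Hp. unfold cell_avg.
  rewrite (sumR_ext _ _ _ (fun _ => c)).
  - rewrite sumR_const. field. apply not_0_INR; lia.
  - intros nu _. unfold sumR, w_gauss. simpl. field.
Qed.

Lemma A_bound n p j f M : (1 <= p)%nat ->
  (forall nu q, (1 <= nu <= p)%nat -> (1 <= q < 3)%nat -> Rabs (f (zt n p j nu q)) <= M) ->
  Rabs (cell_avg n p f j) <= M.
Proof.
  intros Hp H. unfold cell_avg.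
  assert (HP : 0 < INR p) by (apply lt_0_INR; lia).
  rewrite Rabs_mult, Rabs_inv, (Rabs_right (INR p)) by lra.
  assert (Rabs (sumR 1 p (fun nu => sumR 1 2 (fun q =>
     w_gauss * f (zeta (n * p) ((j - 1) * p + nu) q)))) <= INR p * M).
  { apply sumR_abs_bound. intros nu Hnu.
    replace M with (INR 2 * (w_gauss * M)) by (unfold w_gauss; simpl; field).
    apply sumR_abs_bound. intros q Hq. rewrite Rabs_mult.
    unfold w_gauss. rewrite Rabs_right by lra. apply Rmult_le_compat_l; [lra|].
    apply H; lia. }
  apply (Rmult_le_reg_l (INR p)); auto. field_simplify; lra.
Qed.

Lemma cell_unique n j j' t : (1 <= n)%nat -> (1 <= j)%nat -> (1 <= j')%nat ->
  in_cell n j t -> in_cell n j' t -> j = j'.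
Proof.
  intros Hn Hj Hj' [H1 H2] [H3 H4].
  assert (HN : 0 < INR n) by (apply lt_0_INR; lia).
  assert (E1 : INR (j - 1) < INR j').
  { apply (Rmult_lt_reg_r (/ INR n)); [apply Rinv_0_lt_compat; lra|]. unfold Rdiv in *. lra. }
  assert (E2 : INR (j' - 1) < INR j).
  { apply (Rmult_lt_reg_r (/ INR n)); [apply Rinv_0_lt_compat; lra|]. unfold Rdiv in *. lra. }
  apply INR_lt in E1. apply INR_lt in E2. lia.
Qed.

Lemma cell_exists n s : (1 <= n)%nat -> 0 < s <= 1 ->
  exists j, (1 <= j <= n)%nat /\ in_cell n j s.
Proof.
  intros Hn Hs.
  assert (HN : 0 < INR n) by (apply lt_0_INR; lia).
  assert (K : forall k, s <= INR k / INR n -> exists j, (1 <= j <= k)%nat /\ in_cell n j s).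
  { induction k; intros Hk.
    - simpl in Hk. unfold Rdiv in Hk. rewrite Rmult_0_l in Hk. lra.
    - destruct (Rle_dec s (INR k / INR n)) as [H|H].
      + destruct (IHk H) as [j [Hj Hc]]. exists j. split; [lia|auto].
      + exists (S k). split; [lia|]. split; auto.
        replace (S k - 1)%nat with k by lia. lra. }
  apply K. unfold Rdiv. rewrite Rinv_r; lra.
Qed.

Lemma indic_true {P} (d : {P} + {~P}) : P -> indic d = 1.
Proof. intros H; destruct d; [reflexivity|contradiction]. Qed.
Lemma indic_false {P} (d : {P} + {~P}) : ~ P -> indic d = 0.
Proof. intros H; destruct d; [contradiction|reflexivity]. Qed.

Lemma Qn_cell n p g j t : (1 <= n)%nat -> (1 <= j <= n)%nat -> in_cell n j t ->
  Qn n p g t = cell_avg n p g j.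
Proof.
  intros Hn Hj Hc. unfold Qn.
  assert (HN : 0 < INR n) by (apply lt_0_INR; lia).
  assert (Ht : t <> 0).
  { destruct Hc as [H _]. assert (0 <= INR (j - 1) / INR n).
    { unfold Rdiv. apply Rmult_le_pos; [apply pos_INR| left; apply Rinv_0_lt_compat; lra]. }
    lra. }
  rewrite (indic_false (Req_dec_T t 0)) by auto.
  rewrite (sumR_single _ _ _ j); [| lia |].
  2:{ intros i Hi Hne. rewrite indic_false; [ring|].
      intro Hc'. apply Hne. eapply cell_unique; [| | |exact Hc'|exact Hc]; lia. }
  rewrite indic_true by auto. ring.
Qed.

Lemma Qn_Z n p g j nu q : (1 <= n)%nat -> (1 <= p)%nat -> (1 <= j <= n)%nat ->
  (1 <= nu <= p)%nat -> Qn n p g (zt n p j nu q) = cell_avg n p g j.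
Proof.
  intros. apply Qn_cell; auto. destruct (Z_in n p j nu q) as [Hz1 Hz2]; try lia.
  split; lra.
Qed.

Lemma Qn_gen n p g s : (1 <= n)%nat -> in01 s ->
  exists j, (1 <= j <= n)%nat /\ INR (j - 1) / INR n <= s <= INR j / INR n /\
    Qn n p g s = cell_avg n p g j.
Proof.
  intros Hn [Hs0 Hs1].
  assert (HN : 0 < INR n) by (apply lt_0_INR; lia).
  destruct (Req_dec s 0) as [->|Hs].
  - exists 1%nat. split; [lia|]. split.
    + simpl. unfold Rdiv. rewrite Rmult_0_l. split; [lra|].
      rewrite Rmult_1_l; left; apply Rinv_0_lt_compat; lra.
    + unfold Qn. rewrite sumR_zero.
      * rewrite indic_true by reflexivity. ring.
      * intros i Hi. rewrite indic_false; [ring|]. intros [H _].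
        assert (0 <= INR (i - 1) / INR n).
        { unfold Rdiv. apply Rmult_le_pos; [apply pos_INR| left; apply Rinv_0_lt_compat; lra]. }
        lra.
  - destruct (cell_exists n s) as [j [Hj Hc]]; auto; [lra|].
    exists j. split; auto. split; [destruct Hc; lra|]. apply Qn_cell; auto.
Qed.

Lemma Kmp_cells kappa phi n p g s : (1 <= n)%nat -> (1 <= p)%nat ->
  Kmp kappa phi (n * p) g s =
  / INR n * sumR 1 n (fun j => cell_avg n p (fun t => ell kappa s t (phi t) * g t) j).
Proof.
  intros Hn Hp. unfold Kmp, cell_avg. rewrite sumR_regroup.
  rewrite mult_INR, Rinv_mult. rewrite Rmult_assoc. f_equal.
  rewrite <- sumR_scal. apply sumR_ext. intros j _. f_equal.
  apply sumR_ext. intros nu _. apply sumR_ext. intros q _. ring.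
Qed.

Definition box (B s t u : R) : Prop := in01 s /\ in01 t /\ -B <= u <= B.

Lemma between01 a b x : in01 a -> in01 b -> Rmin a b <= x <= Rmax a b -> in01 x.
Proof.
  unfold in01. intros Ha Hb [H1 H2]. split.
  - eapply Rle_trans; [|apply H1]. apply Rmin_glb; lra.
  - eapply Rle_trans; [apply H2|]. apply Rmax_lub; lra.
Qed.

Lemma betweenB B a b x : -B <= a <= B -> -B <= b <= B -> Rmin a b <= x <= Rmax a b -> -B <= x <= B.
Proof.
  intros Ha Hb [H1 H2]. split.
  - eapply Rle_trans; [|apply H1]. apply Rmin_glb; lra.
  - eapply Rle_trans; [apply H2|]. apply Rmax_lub; lra.
Qed.

Lemma G_bounds G B : C2_R3 G -> exists K, 0 <= K /\ forall s t u, box B s t u ->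
  Rabs (G s t u) <= K /\ Rabs (pd1 G s t u) <= K /\ Rabs (pd2 G s t u) <= K /\
  Rabs (pd3 G s t u) <= K /\ Rabs (pd2 (pd1 G) s t u) <= K /\ Rabs (pd3 (pd1 G) s t u) <= K.
Proof.
  intros [[c0 [_ [c1 [c2 c3]]]] [[_ [_ [_ [c12 c13]]]] _]].
  destruct (box_bound _ c0 B) as [K0 H0].
  destruct (box_bound _ c1 B) as [K1 H1].
  destruct (box_bound _ c2 B) as [K2 H2].
  destruct (box_bound _ c3 B) as [K3 H3].
  destruct (box_bound _ c12 B) as [K4 H4].
  destruct (box_bound _ c13 B) as [K5 H5].
  exists (Rabs K0 + Rabs K1 + Rabs K2 + Rabs K3 + Rabs K4 + Rabs K5).
  pose proof (Rabs_pos K0). pose proof (Rabs_pos K1). pose proof (Rabs_pos K2).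
  pose proof (Rabs_pos K3). pose proof (Rabs_pos K4). pose proof (Rabs_pos K5).
  pose proof (Rle_abs K0). pose proof (Rle_abs K1). pose proof (Rle_abs K2).
  pose proof (Rle_abs K3). pose proof (Rle_abs K4). pose proof (Rle_abs K5).
  split; [lra|]. intros s t u [Hs [Ht Hu]].
  specialize (H0 s t u Hs Ht Hu). specialize (H1 s t u Hs Ht Hu).
  specialize (H2 s t u Hs Ht Hu). specialize (H3 s t u Hs Ht Hu).
  specialize (H4 s t u Hs Ht Hu). specialize (H5 s t u Hs Ht Hu).
  repeat split; lra.
Qed.

Lemma lip_t H phi B Lp K s t c :
  (forall s t u, ex_derive (fun x => H s x u) t /\ ex_derive (fun x => H s t x) u) ->
  (forall s t u, box B s t u -> Rabs (pd2 H s t u) <= K /\ Rabs (pd3 H s t u) <= K) ->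
  (forall t, in01 t -> -B <= phi t <= B) ->
  (forall t c, in01 t -> in01 c -> Rabs (phi t - phi c) <= Lp * Rabs (t - c)) ->
  0 <= K ->
  in01 s -> in01 t -> in01 c ->
  Rabs (H s t (phi t) - H s c (phi c)) <= K * (1 + Lp) * Rabs (t - c).
Proof.
  intros Hd HK Hb Hl HK0 Hs Ht Hc.
  replace (H s t (phi t) - H s c (phi c)) with
    ((H s t (phi t) - H s c (phi t)) + (H s c (phi t) - H s c (phi c))) by ring.
  eapply Rle_trans; [apply Rabs_triang|].
  assert (E1 : Rabs (H s t (phi t) - H s c (phi t)) <= K * Rabs (t - c)).
  { apply (mvt_bound (fun x => H s x (phi t))).
    - intros x; exact (proj1 (Hd s x (phi t))).
    - intros x Hx. apply (HK s x (phi t)). split; [exact Hs|]. split.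
      + exact (between01 c t x Hc Ht Hx).
      + exact (Hb t Ht). }
  assert (E2 : Rabs (H s c (phi t) - H s c (phi c)) <= K * Rabs (phi t - phi c)).
  { apply (mvt_bound (fun x => H s c x)).
    - intros x; exact (proj2 (Hd s c x)).
    - intros x Hx. apply (HK s c x). split; [exact Hs|]. split; [exact Hc|].
      exact (betweenB B (phi c) (phi t) x (Hb c Hc) (Hb t Ht) Hx). }
  pose proof (Hl t c Ht Hc). pose proof (Rabs_pos (t - c)).
  assert (K * Rabs (phi t - phi c) <= K * (Lp * Rabs (t - c))) by (apply Rmult_le_compat_l; auto).
  lra.
Qed.

Lemma lip_s G B K s s' t u : C2_R3 G ->
  (forall s t u, box B s t u -> Rabs (pd1 G s t u) <= K) ->
  in01 s -> in01 s' -> in01 t -> -B <= u <= B ->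
  Rabs (G s t u - G s' t u) <= K * Rabs (s - s').
Proof.
  intros [[_ [Hd _]] _] HK Hs Hs' Ht Hu.
  apply (mvt_bound (fun x => G x t u)).
  - intros x; exact (proj1 (Hd x t u)).
  - intros x Hx. apply HK. split; [exact (between01 s' s x Hs' Hs Hx)|].
    split; [exact Ht|exact Hu].
Qed.

Lemma mixed_G G phi B Lp K s s' t c : C2_R3 G ->
  (forall s t u, box B s t u -> Rabs (pd2 (pd1 G) s t u) <= K /\ Rabs (pd3 (pd1 G) s t u) <= K) ->
  (forall t, in01 t -> -B <= phi t <= B) ->
  (forall t c, in01 t -> in01 c -> Rabs (phi t - phi c) <= Lp * Rabs (t - c)) ->
  0 <= K ->
  in01 s -> in01 s' -> in01 t -> in01 c ->
  Rabs (G s t (phi t) - G s' t (phi t) - (G s c (phi c) - G s' c (phi c)))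
    <= K * (1 + Lp) * Rabs (t - c) * Rabs (s - s').
Proof.
  intros HG HK Hb Hl HK0 Hs Hs' Ht Hc.
  destruct HG as [[_ [Hd _]] [[_ [Hd1 _]] _]].
  set (g := fun x => G x t (phi t) - G x c (phi c)).
  replace (G s t (phi t) - G s' t (phi t) - (G s c (phi c) - G s' c (phi c))) with
    (g s - g s') by (unfold g; ring).
  apply mvt_bound.
  - intros x. unfold g. apply (ex_derive_minus (K:=R_AbsRing) (V:=R_NormedModule)
       (fun x => G x t (phi t)) (fun x => G x c (phi c))).
    exact (proj1 (Hd x t (phi t))). exact (proj1 (Hd x c (phi c))).
  - intros x Hx. unfold g. rewrite Derive_minus by (first [exact (proj1 (Hd x t (phi t)))| exact (proj1 (Hd x c (phi c)))]). fold (pd1 G x t (phi t)) (pd1 G x c (phi c)).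
    unfold pd1 at 1 2.
    apply (lip_t (pd1 G) phi B Lp K x t c); auto.
    + intros a b u. destruct (Hd1 a b u) as [_ [X Y]]. split; [exact X|exact Y].
    + exact (between01 s' s x Hs' Hs Hx).
Qed.

Lemma kernel_props kappa phi B Lp : class_G2_2_0 kappa ->
  (forall t, in01 t -> -B <= phi t <= B) ->
  (forall t c, in01 t -> in01 c -> Rabs (phi t - phi c) <= Lp * Rabs (t - c)) ->
  0 <= Lp ->
  exists K, 0 <= K /\
  (forall s t, in01 s -> in01 t -> Rabs (ell kappa s t (phi t)) <= K) /\
  (forall s t c, in01 s -> in01 t -> in01 c -> ((t <= s /\ c <= s) \/ (s <= t /\ s <= c)) ->
     Rabs (ell kappa s t (phi t) - ell kappa s c (phi c)) <= K * Rabs (t - c)) /\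
  (forall s s' t, in01 s -> in01 s' -> in01 t ->
     Rabs (ell kappa s t (phi t) - ell kappa s' t (phi t)) <= K * Rabs (s - s')) /\
  (forall s s' t c, in01 s -> in01 s' -> in01 t -> in01 c ->
     ((t <= s /\ c <= s /\ t <= s' /\ c <= s') \/ (s <= t /\ s <= c /\ s' <= t /\ s' <= c)) ->
     Rabs (ell kappa s t (phi t) - ell kappa s' t (phi t) - (ell kappa s c (phi c) - ell kappa s' c (phi c)))
       <= K * Rabs (s - s') * Rabs (t - c)).
Proof.
  intros Hk Hb Hl HLp.
  destruct Hk as [_ [_ [[l1 [l2 [[G1 [HG1 E1]] [[G2 [HG2 E2]] [El1 El2]]]]] _]]].
  assert (F1 : forall s t u, 0 <= t -> t <= s -> s <= 1 -> ell kappa s t u = G1 s t u).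
  { intros. rewrite El1, E1; auto; unfold Psi1; auto. }
  assert (F2 : forall s t u, 0 <= s -> s <= t -> t <= 1 -> ell kappa s t u = G2 s t u).
  { intros. rewrite El2, E2; auto; unfold Psi2; auto. }
  destruct (G_bounds G1 B HG1) as [K1 [HK1 B1]].
  destruct (G_bounds G2 B HG2) as [K2 [HK2 B2]].
  set (Km := Rmax K1 K2).
  assert (Hm1 : K1 <= Km) by apply Rmax_l. assert (Hm2 : K2 <= Km) by apply Rmax_r.
  assert (B1' : forall s t u, box B s t u ->
    Rabs (G1 s t u) <= Km /\ Rabs (pd1 G1 s t u) <= Km /\ Rabs (pd2 G1 s t u) <= Km /\
    Rabs (pd3 G1 s t u) <= Km /\ Rabs (pd2 (pd1 G1) s t u) <= Km /\ Rabs (pd3 (pd1 G1) s t u) <= Km).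
  { intros s t u Hb'. specialize (B1 s t u Hb'). repeat split; lra. }
  assert (B2' : forall s t u, box B s t u ->
    Rabs (G2 s t u) <= Km /\ Rabs (pd1 G2 s t u) <= Km /\ Rabs (pd2 G2 s t u) <= Km /\
    Rabs (pd3 G2 s t u) <= Km /\ Rabs (pd2 (pd1 G2) s t u) <= Km /\ Rabs (pd3 (pd1 G2) s t u) <= Km).
  { intros s t u Hb'. specialize (B2 s t u Hb'). repeat split; lra. }
  clear B1 B2.
  assert (HKm : 0 <= Km) by lra.
  exists (Km * (1 + Lp)).
  assert (HKK : Km <= Km * (1 + Lp)) by nra.
  split; [nra|].
  split; [|split; [|split]].
  - intros s t Hs Ht.
    destruct (Rle_dec t s).
    + rewrite F1 by (unfold in01 in *; lra).
      pose proof (proj1 (B1' s t (phi t) (conj Hs (conj Ht (Hb t Ht))))). lra.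
    + rewrite F2 by (unfold in01 in *; lra).
      pose proof (proj1 (B2' s t (phi t) (conj Hs (conj Ht (Hb t Ht))))). lra.
  - intros s t c Hs Ht Hc [[H1 H2]|[H1 H2]].
    + rewrite !F1 by (unfold in01 in *; lra).
      apply (lip_t G1 phi B Lp Km s t c); auto.
      * intros a b u. destruct HG1 as [[_ [Hd _]] _]. destruct (Hd a b u) as [_ [X Y]]. split; [exact X|exact Y].
      * intros a b u Hb'. specialize (B1' a b u Hb'). split; apply B1'.
    + rewrite !F2 by (unfold in01 in *; lra).
      apply (lip_t G2 phi B Lp Km s t c); auto.
      * intros a b u. destruct HG2 as [[_ [Hd _]] _]. destruct (Hd a b u) as [_ [X Y]]. split; [exact X|exact Y].
      * intros a b u Hb'. specialize (B2' a b u Hb'). split; apply B2'.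
  - intros s s' t Hs Hs' Ht.
    assert (Hpt := Hb t Ht).
    assert (L1 : forall a b, in01 a -> in01 b -> t <= a -> t <= b ->
      Rabs (ell kappa a t (phi t) - ell kappa b t (phi t)) <= Km * Rabs (a - b)).
    { intros a b Ha Hb0 Ha' Hb'. rewrite !F1 by (unfold in01 in *; lra).
      apply (lip_s G1 B); auto. intros x y z Hbx. apply (B1' x y z Hbx). }
    assert (L2 : forall a b, in01 a -> in01 b -> a <= t -> b <= t ->
      Rabs (ell kappa a t (phi t) - ell kappa b t (phi t)) <= Km * Rabs (a - b)).
    { intros a b Ha Hb0 Ha' Hb'. rewrite !F2 by (unfold in01 in *; lra).
      apply (lip_s G2 B); auto. intros x y z Hbx. apply (B2' x y z Hbx). }
    assert (Rabs (s - s') * Km <= Rabs (s - s') * (Km * (1 + Lp))) by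
      (apply Rmult_le_compat_l; [apply Rabs_pos|lra]).
    destruct (Rle_dec t s); destruct (Rle_dec t s').
    + pose proof (L1 s s' Hs Hs' r r0). lra.
    + pose proof (L1 s t Hs Ht r (Rle_refl _)). pose proof (L2 t s' Ht Hs' (Rle_refl _) ltac:(lra)).
      pose proof (Rabs_triang (ell kappa s t (phi t) - ell kappa t t (phi t))
                              (ell kappa t t (phi t) - ell kappa s' t (phi t))).
      replace (ell kappa s t (phi t) - ell kappa t t (phi t) +
        (ell kappa t t (phi t) - ell kappa s' t (phi t))) with
        (ell kappa s t (phi t) - ell kappa s' t (phi t)) in * by ring.
      rewrite (Rabs_pos_eq (s - t)) in * by lra. rewrite (Rabs_pos_eq (t - s')) in * by lra.
      rewrite (Rabs_pos_eq (s - s')) in * by lra. lra.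
    + pose proof (L2 s t Hs Ht ltac:(lra) (Rle_refl _)). pose proof (L1 t s' Ht Hs' (Rle_refl _) r).
      pose proof (Rabs_triang (ell kappa s t (phi t) - ell kappa t t (phi t))
                              (ell kappa t t (phi t) - ell kappa s' t (phi t))).
      replace (ell kappa s t (phi t) - ell kappa t t (phi t) +
        (ell kappa t t (phi t) - ell kappa s' t (phi t))) with
        (ell kappa s t (phi t) - ell kappa s' t (phi t)) in * by ring.
      rewrite (Rabs_left1 (s - t)) in * by lra. rewrite (Rabs_left1 (t - s')) in * by lra.
      rewrite (Rabs_left1 (s - s')) in * by lra. lra.
    + pose proof (L2 s s' Hs Hs' ltac:(lra) ltac:(lra)). lra.
  - intros s s' t c Hs Hs' Ht Hc Hside.
    assert (E : Km * (1 + Lp) * Rabs (t - c) * Rabs (s - s') =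
                Km * (1 + Lp) * Rabs (s - s') * Rabs (t - c)) by ring.
    destruct Hside as [[H1 [H2 [H3 H4]]]|[H1 [H2 [H3 H4]]]].
    + rewrite !F1 by (unfold in01 in *; lra). rewrite <- E.
      apply (mixed_G G1 phi B Lp Km); auto.
      intros a b u Hb'. specialize (B1' a b u Hb'). split; apply B1'.
    + rewrite !F2 by (unfold in01 in *; lra). rewrite <- E.
      apply (mixed_G G2 phi B Lp Km); auto.
      intros a b u Hb'. specialize (B2' a b u Hb'). split; apply B2'.
Qed.

Definition cl (n j : nat) (x : R) : Prop := INR (j - 1) / INR n <= x <= INR j / INR n.

Lemma INR_jm1 j : (1 <= j)%nat -> INR j = INR (j - 1) + 1.
Proof. intros; rewrite minus_INR by lia; simpl; ring. Qed.

Lemma cl_order n k j t s : (1 <= n)%nat -> (k < j)%nat -> cl n k t -> cl n j s -> t <= s.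
Proof.
  intros Hn Hkj [_ Ht] [Hs _].
  assert (HN : 0 < / INR n) by (apply Rinv_0_lt_compat, lt_0_INR; lia).
  assert (INR k <= INR (j - 1)) by (apply le_INR; lia).
  unfold Rdiv in *. nra.
Qed.

Lemma cl_width n j x y : (1 <= n)%nat -> (1 <= j)%nat -> cl n j x -> cl n j y -> Rabs (x - y) <= / INR n.
Proof.
  intros Hn Hj [H1 H2] [H3 H4]. rewrite (INR_jm1 j Hj) in *.
  unfold Rdiv in *. rewrite Rmult_plus_distr_r, Rmult_1_l in *.
  apply Rabs_le. lra.
Qed.

Lemma cl_01 n j x : (1 <= j <= n)%nat -> cl n j x -> in01 x.
Proof.
  intros Hj [H1 H2].
  assert (HN : 0 < INR n) by (apply lt_0_INR; lia).
  split.
  - eapply Rle_trans; [|apply H1]. unfold Rdiv. apply Rmult_le_pos; [apply pos_INR|].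
    left; apply Rinv_0_lt_compat; lra.
  - eapply Rle_trans; [apply H2|]. unfold Rdiv.
    apply (Rmult_le_reg_r (INR n)); auto. rewrite Rmult_assoc, Rinv_l by lra.
    rewrite Rmult_1_r, Rmult_1_l. apply le_INR; lia.
Qed.

Lemma Z_cl n p j nu q : (1 <= n)%nat -> (1 <= p)%nat -> (1 <= j)%nat -> (1 <= nu <= p)%nat ->
  cl n j (zt n p j nu q).
Proof. intros. destruct (Z_in n p j nu q) as [Hz1 Hz2]; auto. split; lra. Qed.

Lemma cl_left n j : (1 <= n)%nat -> (1 <= j)%nat -> cl n j (INR (j - 1) / INR n).
Proof.
  intros Hn Hj. split; [lra|]. rewrite (INR_jm1 j Hj).
  assert (HN : 0 < / INR n) by (apply Rinv_0_lt_compat, lt_0_INR; lia).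
  unfold Rdiv. nra.
Qed.

Lemma A_IQ_zero n p g k : (1 <= n)%nat -> (1 <= p)%nat -> (1 <= k <= n)%nat ->
  cell_avg n p (IQn n p g) k = 0.
Proof.
  intros Hn Hp Hk.
  rewrite (A_ext n p k _ (fun t => 1 * g t + (-1) * (fun _ => cell_avg n p g k) t)).
  - rewrite A_lin, A_const by auto. ring.
  - intros nu q Hnu Hq. unfold IQn. rewrite Qn_Z by auto. ring.
Qed.

Lemma sum_cells_bound n p j0 (X e : R -> R) (a b : R) :
  (1 <= n)%nat -> (1 <= p)%nat -> (1 <= j0 <= n)%nat -> 0 <= b ->
  (forall k, (1 <= k <= n)%nat -> cell_avg n p e k = 0) ->
  (forall k nu q, (1 <= k <= n)%nat -> k <> j0 -> (1 <= nu <= p)%nat ->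
     Rabs (X (zt n p k nu q) - X (INR (k - 1) / INR n)) * Rabs (e (zt n p k nu q)) <= a) ->
  (forall nu q, (1 <= nu <= p)%nat ->
     Rabs (X (zt n p j0 nu q)) * Rabs (e (zt n p j0 nu q)) <= a + b) ->
  Rabs (sumR 1 n (fun k => cell_avg n p (fun t => X t * e t) k)) <= INR n * a + b.
Proof.
  intros Hn Hp Hj0 Hb He Ha Hab.
  apply (sumR_abs_bound_exc _ _ _ _ _ j0); auto.
  - intros k Hk Hne.
    set (c := X (INR (k - 1) / INR n)).
    rewrite (A_ext n p k _ (fun t => 1 * ((X t - c) * e t) + c * e t)).
    + rewrite A_lin, He by lia. rewrite Rmult_0_r, Rplus_0_r, Rmult_1_l.
      apply A_bound; auto. intros nu q Hnu Hq. rewrite Rabs_mult. apply Ha; auto; lia.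
    + intros; ring.
  - apply A_bound; auto. intros nu q Hnu Hq. rewrite Rabs_mult. apply Hab; auto.
Qed.

Lemma sumR_minus lo k f g : sumR lo k f - sumR lo k g = sumR lo k (fun i => f i - g i).
Proof.
  replace (sumR lo k f - sumR lo k g) with (sumR lo k f + (-1) * sumR lo k g) by ring.
  rewrite <- sumR_scal, <- sumR_plus. apply sumR_ext. intros; ring.
Qed.

Lemma A_diff_const n p j c g : (1 <= p)%nat ->
  c - cell_avg n p g j = cell_avg n p (fun t => 1 * (fun _ => c) t + (-1) * g t) j.
Proof. intros Hp. rewrite A_lin, A_const by auto. ring. Qed.

Lemma mul_bound a b x y : 0 <= x -> 0 <= y -> Rabs a <= x -> Rabs b <= y -> Rabs a * Rabs b <= x * y.
Proof. intros. apply Rmult_le_compat; auto; apply Rabs_pos. Qed.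

Lemma e_bound n p v Lv k nu q : (1 <= n)%nat -> (1 <= p)%nat -> (1 <= k <= n)%nat ->
  (1 <= nu <= p)%nat -> 0 <= Lv ->
  (forall x y, in01 x -> in01 y -> Rabs (v x - v y) <= Lv * Rabs (x - y)) ->
  Rabs (IQn n p v (zt n p k nu q)) <= Lv * / INR n.
Proof.
  intros Hn Hp Hk Hnu HLv Hv. unfold IQn. rewrite Qn_Z by auto.
  rewrite A_diff_const by auto. apply A_bound; auto. intros nu' q' Hnu' _.
  replace (1 * v (zt n p k nu q) + -1 * v (zt n p k nu' q')) with
    (v (zt n p k nu q) - v (zt n p k nu' q')) by ring.
  pose proof (Z_cl n p k nu q Hn Hp ltac:(lia) Hnu).
  pose proof (Z_cl n p k nu' q' Hn Hp ltac:(lia) Hnu').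
  eapply Rle_trans; [apply Hv; [exact (cl_01 n k _ Hk H) | exact (cl_01 n k _ Hk H0)]|].
  apply Rmult_le_compat_l; auto. apply (cl_width n k); auto; lia.
Qed.

Lemma part1 kappa phi v K Lv n p :
  (1 <= n)%nat -> (1 <= p)%nat -> 0 <= K -> 0 <= Lv ->
  (forall s s' t, in01 s -> in01 s' -> in01 t ->
     Rabs (ell kappa s t (phi t) - ell kappa s' t (phi t)) <= K * Rabs (s - s')) ->
  (forall s s' t c, in01 s -> in01 s' -> in01 t -> in01 c ->
     ((t <= s /\ c <= s /\ t <= s' /\ c <= s') \/ (s <= t /\ s <= c /\ s' <= t /\ s' <= c)) ->
     Rabs (ell kappa s t (phi t) - ell kappa s' t (phi t) - (ell kappa s c (phi c) - ell kappa s' c (phi c)))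
       <= K * Rabs (s - s') * Rabs (t - c)) ->
  (forall x y, in01 x -> in01 y -> Rabs (v x - v y) <= Lv * Rabs (x - y)) ->
  forall s, in01 s ->
  Rabs (IQn n p (Kmp kappa phi (n * p) (IQn n p v)) s) <= 2 * K * Lv * (/ INR n) ^ 3.
Proof.
  intros Hn Hp HK HLv Kc Kd Hv.
  assert (HN : 0 < INR n) by (apply lt_0_INR; lia).
  set (h := / INR n).
  assert (Hh : 0 < h) by (apply Rinv_0_lt_compat; lra).
  assert (Hnh : INR n * h = 1) by (unfold h; field; lra).
  set (e := IQn n p v).
  set (w := Kmp kappa phi (n * p) e).
  assert (He : forall k nu q, (1 <= k <= n)%nat -> (1 <= nu <= p)%nat ->
     Rabs (e (zt n p k nu q)) <= Lv * h).
  { intros. apply e_bound; auto. }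
  assert (Hw : forall j0 s s', (1 <= j0 <= n)%nat -> cl n j0 s -> cl n j0 s' ->
     Rabs (w s - w s') <= 2 * K * Lv * h ^ 3).
  { intros j0 s s' Hj0 Hs Hs'.
    assert (Hs01 := cl_01 n j0 s Hj0 Hs). assert (Hs'01 := cl_01 n j0 s' Hj0 Hs').
    assert (Hss : Rabs (s - s') <= h) by (apply (cl_width n j0); auto; lia).
    unfold w. rewrite !Kmp_cells by auto. fold h.
    rewrite <- Rmult_minus_distr_l, sumR_minus.
    rewrite (sumR_ext _ _ _ (fun k => cell_avg n p (fun t =>
       (ell kappa s t (phi t) - ell kappa s' t (phi t)) * e t) k)).
    2:{ intros k _. rewrite <- (Rmult_1_l (cell_avg n p _ k)) at 1.
        replace (1 * cell_avg n p (fun t : R => ell kappa s t (phi t) * e t) k -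
          cell_avg n p (fun t : R => ell kappa s' t (phi t) * e t) k) with
          (1 * cell_avg n p (fun t : R => ell kappa s t (phi t) * e t) k +
          (-1) * cell_avg n p (fun t : R => ell kappa s' t (phi t) * e t) k) by ring.
        rewrite <- A_lin. apply A_ext. intros; ring. }
    rewrite Rabs_mult, (Rabs_right h) by lra.
    replace (2 * K * Lv * h ^ 3) with (h * (INR n * (K * Lv * h ^ 3) + K * Lv * h ^ 2))
      by (replace (h * (INR n * (K * Lv * h ^ 3) + K * Lv * h ^ 2)) with
           ((INR n * h) * (K * Lv * h ^ 3) + K * Lv * h ^ 3) by ring; rewrite Hnh; ring).
    apply Rmult_le_compat_l; [lra|].
    apply (sum_cells_bound n p j0); auto.
    - apply Rmult_le_pos; [nra|]. apply pow_le; lra.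
    - intros k Hk. apply A_IQ_zero; auto.
    - intros k nu q Hk Hne Hnu.
      set (c := INR (k - 1) / INR n).
      assert (Hzc := Z_cl n p k nu q Hn Hp ltac:(lia) Hnu).
      assert (Hcc := cl_left n k Hn ltac:(lia)). fold c in Hcc.
      assert (Hz01 := cl_01 n k _ Hk Hzc). assert (Hc01 := cl_01 n k _ Hk Hcc).
      assert (Hzw : Rabs (zt n p k nu q - c) <= h) by (apply (cl_width n k); auto; lia).
      replace (K * Lv * h ^ 3) with ((K * h * h) * (Lv * h)) by ring.
      apply mul_bound; [nra| nra | | apply He; auto].
      assert (Hside : (zt n p k nu q <= s /\ c <= s /\ zt n p k nu q <= s' /\ c <= s') \/
                      (s <= zt n p k nu q /\ s <= c /\ s' <= zt n p k nu q /\ s' <= c)).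
      { destruct (Nat.lt_ge_cases k j0) as [Hlt|Hge].
        - left. repeat split.
          + exact (cl_order n k j0 _ _ Hn Hlt Hzc Hs).
          + exact (cl_order n k j0 _ _ Hn Hlt Hcc Hs).
          + exact (cl_order n k j0 _ _ Hn Hlt Hzc Hs').
          + exact (cl_order n k j0 _ _ Hn Hlt Hcc Hs').
        - assert (Hlt : (j0 < k)%nat) by lia. right. repeat split.
          + exact (cl_order n j0 k _ _ Hn Hlt Hs Hzc).
          + exact (cl_order n j0 k _ _ Hn Hlt Hs Hcc).
          + exact (cl_order n j0 k _ _ Hn Hlt Hs' Hzc).
          + exact (cl_order n j0 k _ _ Hn Hlt Hs' Hcc). }
      eapply Rle_trans; [apply Kd; auto|].
      pose proof (Rabs_pos (s - s')). pose proof (Rabs_pos (zt n p k nu q - c)).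
      apply Rmult_le_compat; try nra.
    - intros nu q Hnu.
      assert (Hzc := Z_cl n p j0 nu q Hn Hp ltac:(lia) Hnu).
      assert (Hz01 := cl_01 n j0 _ Hj0 Hzc).
      assert (K * Lv * h ^ 3 >= 0) by (apply Rle_ge; apply Rmult_le_pos; [nra|apply pow_le; lra]).
      enough (Rabs (ell kappa s (zt n p j0 nu q) (phi (zt n p j0 nu q)) -
                    ell kappa s' (zt n p j0 nu q) (phi (zt n p j0 nu q))) *
              Rabs (e (zt n p j0 nu q)) <= K * Lv * h ^ 2) by lra.
      replace (K * Lv * h ^ 2) with ((K * h) * (Lv * h)) by ring.
      apply mul_bound; [nra|nra| |apply He; auto].
      eapply Rle_trans; [apply Kc; auto|]. apply Rmult_le_compat_l; auto. }
  intros s Hs.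
  destruct (Qn_gen n p w s Hn Hs) as [j0 [Hj0 [Hcl HQ]]].
  unfold IQn at 1. fold e. fold w. rewrite HQ, A_diff_const by auto.
  apply A_bound; auto. intros nu q Hnu _.
  replace (1 * w s + -1 * w (zt n p j0 nu q)) with (w s - w (zt n p j0 nu q)) by ring.
  apply (Hw j0); auto. apply Z_cl; auto; lia.
Qed.

Lemma part2 kappa phi g K C1 n p :
  (1 <= n)%nat -> (1 <= p)%nat -> 0 <= K -> 0 <= C1 ->
  (forall s t, in01 s -> in01 t -> Rabs (ell kappa s t (phi t)) <= K) ->
  (forall s t c, in01 s -> in01 t -> in01 c -> ((t <= s /\ c <= s) \/ (s <= t /\ s <= c)) ->
     Rabs (ell kappa s t (phi t) - ell kappa s c (phi c)) <= K * Rabs (t - c)) ->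
  (forall x, in01 x -> Rabs (IQn n p g x) <= C1 * (/ INR n) ^ 3) ->
  forall s, in01 s ->
  Rabs (Kmp kappa phi (n * p) (IQn n p g) s) <= 2 * K * C1 * (/ INR n) ^ 4.
Proof.
  intros Hn Hp HK HC1 Ka Kb Heps s Hs.
  assert (HN : 0 < INR n) by (apply lt_0_INR; lia).
  set (h := / INR n) in *.
  assert (Hh : 0 < h) by (apply Rinv_0_lt_compat; lra).
  assert (Hnh : INR n * h = 1) by (unfold h; field; lra).
  destruct (Qn_gen n p g s Hn Hs) as [j0 [Hj0 [Hcl _]]].
  rewrite Kmp_cells by auto. fold h.
  rewrite Rabs_mult, (Rabs_right h) by lra.
  replace (2 * K * C1 * h ^ 4) with (h * (INR n * ((K * h) * (C1 * h ^ 3)) + K * (C1 * h ^ 3)))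
    by (replace (h * (INR n * ((K * h) * (C1 * h ^ 3)) + K * (C1 * h ^ 3))) with
         ((INR n * h) * (K * C1 * h ^ 4) + K * C1 * h ^ 4) by ring; rewrite Hnh; ring).
  assert (Hh3 : 0 <= C1 * h ^ 3) by (apply Rmult_le_pos; [lra|apply pow_le; lra]).
  apply Rmult_le_compat_l; [lra|].
  apply (sum_cells_bound n p j0); auto.
  - apply Rmult_le_pos; lra.
  - intros k Hk. apply A_IQ_zero; auto.
  - intros k nu q Hk Hne Hnu.
    set (c := INR (k - 1) / INR n).
    assert (Hzc := Z_cl n p k nu q Hn Hp ltac:(lia) Hnu).
    assert (Hcc := cl_left n k Hn ltac:(lia)). fold c in Hcc.
    assert (Hz01 := cl_01 n k _ Hk Hzc). assert (Hc01 := cl_01 n k _ Hk Hcc).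
    assert (Hzw : Rabs (zt n p k nu q - c) <= h) by (apply (cl_width n k); auto; lia).
    apply mul_bound; [nra| lra | | apply Heps; auto].
    assert (Hside : (zt n p k nu q <= s /\ c <= s) \/ (s <= zt n p k nu q /\ s <= c)).
    { destruct (Nat.lt_ge_cases k j0) as [Hlt|Hge].
      - left. split.
        + exact (cl_order n k j0 _ _ Hn Hlt Hzc Hcl).
        + exact (cl_order n k j0 _ _ Hn Hlt Hcc Hcl).
      - assert (Hlt : (j0 < k)%nat) by lia. right. split.
        + exact (cl_order n j0 k _ _ Hn Hlt Hcl Hzc).
        + exact (cl_order n j0 k _ _ Hn Hlt Hcl Hcc). }
    eapply Rle_trans; [apply Kb; auto|]. apply Rmult_le_compat_l; auto.
  - intros nu q Hnu.
    assert (Hzc := Z_cl n p j0 nu q Hn Hp ltac:(lia) Hnu).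
    assert (Hz01 := cl_01 n j0 _ Hj0 Hzc).
    assert (0 <= K * h * (C1 * h ^ 3)) by (apply Rmult_le_pos; nra).
    enough (Rabs (ell kappa s (zt n p j0 nu q) (phi (zt n p j0 nu q))) *
            Rabs (IQn n p g (zt n p j0 nu q)) <= K * (C1 * h ^ 3)) by lra.
    apply mul_bound; auto.
Qed.

Theorem proposition4p1
  (kappa : R -> R -> R -> R) (f phi v : R -> R)
  (Hk : class_G2_2_0 kappa)
  (Hf : C2_01 f)
  (Hphi_sol : solves kappa f phi)
  (Hphi_uniq : forall x, C0_01 x -> solves kappa f x -> forall s, in01 s -> x s = phi s)
  (Hphi_C2 : C2_01 phi)
  (Hv : C1_01 v) :
  (exists C : R, exists N : nat, forall n p : nat, (N <= n)%nat -> (1 <= p)%nat ->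
     forall s, in01 s ->
       Rabs (IQn n p (Kmp kappa phi (n * p) (IQn n p v)) s) <= C * (/ INR n) ^ 3)
  /\
  (exists C : R, exists N : nat, forall n p : nat, (N <= n)%nat -> (1 <= p)%nat ->
     forall s, in01 s ->
       Rabs (Kmp kappa phi (n * p) (IQn n p (Kmp kappa phi (n * p) (IQn n p v))) s)
         <= C * (/ INR n) ^ 4).
Proof.
  destruct Hphi_C2 as [Phi [[HP1 _] EP]].
  destruct (lip_1d Phi HP1) as [Lp [HLp HLP]].
  destruct (bound_1d Phi (proj1 HP1)) as [Bp HBp].
  assert (Hpb : forall t, in01 t -> -Bp <= phi t <= Bp).
  { intros t Ht. rewrite <- (EP t Ht). specialize (HBp t Ht).
    pose proof (Rle_abs (Phi t)). pose proof (Rle_abs (- Phi t)). rewrite Rabs_Ropp in *. lra. }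
  assert (Hpl : forall t c, in01 t -> in01 c -> Rabs (phi t - phi c) <= Lp * Rabs (t - c)).
  { intros t c Ht Hc. rewrite <- (EP t Ht), <- (EP c Hc). auto. }
  destruct Hv as [V [HV EV]].
  destruct (lip_1d V HV) as [Lv [HLv HLV]].
  assert (Hvl : forall x y, in01 x -> in01 y -> Rabs (v x - v y) <= Lv * Rabs (x - y)).
  { intros x y Hx Hy. rewrite <- (EV x Hx), <- (EV y Hy). auto. }
  destruct (kernel_props kappa phi Bp Lp Hk Hpb Hpl HLp) as [K [HK [Ka [Kb [Kc Kd]]]]].
  split.
  - exists (2 * K * Lv), 1%nat. intros n p Hn Hp s Hs. apply part1; auto.
  - exists (2 * K * (2 * K * Lv)), 1%nat. intros n p Hn Hp s Hs.
    apply part2; auto.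
    + apply Rmult_le_pos; [apply Rmult_le_pos|]; lra.
    + intros x Hx. apply part1; auto.
Qed.
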